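(* In the situation of Theorem 2 (a fully regular system $A(y)=b$ with $A=A_\ell\sigma^\ell+\dots+A_0$, $A_i\in\mathbb{F}[t]^{n\times n}$, $b\in\mathbb{F}[t]^n$, $\det A_\ell\neq 0$; a $P\in\mathrm{GL}_n(\mathbb{F}(t)[\sigma,\sigma^{-1}])$ with $PA=\sum_{i=0}^{\tilde\ell}\tilde A_i\sigma^i$, $\tilde A_i\in\mathbb{F}[t]^{n\times n}$, $P(b)\in\mathbb{F}[t]^n$, $\det\tilde A_0\ne0$; $m$ the common denominator of $A_\ell^{-1}$, $p$ the common denominator of $\tilde A_0^{-1}$; and a solution $y=d^{-1}z$ in reduced representation), one has $$\mathrm{disp}(\operatorname{ap}(d))\le\mathrm{disp}\big(\sigma^{-\ell}(\operatorname{ap}(m)),\operatorname{ap}(p)\big).$$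
   Context: All fields contain $\mathbb{Q}$. $(\mathbb{F}(t),\sigma)$ is a $\Pi\Sigma$-extension of the difference field $(\mathbb{F},\sigma)$: $\sigma$ is an automorphism of the rational function field $\mathbb{F}(t)$ restricting to an automorphism of $\mathbb{F}$, with $\sigma(t)=t+\beta$ ($\beta\in\mathbb{F}\setminus\{0\}$, $\Sigma$-monomial) or $\sigma(t)=\alpha t$ ($\alpha\in\mathbb{F}\setminus\{0\}$, $\Pi$-monomial), and the fixed field of $\sigma$ on $\mathbb{F}(t)$ equals that on $\mathbb{F}$. For $a,b\in\mathbb{F}[t]\setminus\{0\}$: $\mathrm{spread}(a,b)=\{k\ge0:\gcd(a,\sigma^k(b))\notin\mathbb{F}\}$, $\mathrm{disp}(a,b)=\max\mathrm{spread}(a,b)$ ($\max\emptyset=-\infty$, max of infinite set $=\infty$), $\mathrm{disp}(a)=\mathrm{disp}(a,a)$. $\mathrm{per}(a)=1$ for a $\Sigma$-monomial, $t^\mu$ with $\mu$ maximal such that $t^\mu\mid a$ for a $\Pi$-monomial; $\operatorname{ap}(a)=a/\mathrm{per}(a)$. Reduced representation: $d\in\mathbb{F}[t]\setminus\{0\}$, $z\in\mathbb{F}[t]^n$, $\gcd(z_1,\dots,z_n,d)=1$. $\mathbb{F}(t)[\sigma]$ is the Ore polynomial ring with $\sigma a=\sigma(a)\sigma$, $\mathbb{F}(t)[\sigma,\sigma^{-1}]$ its localisation at powers of $\sigma$; operators act on $\mathbb{F}(t)$ by $(\sum a_i\sigma^i)(\alpha)=\sum a_i\sigma^i(\alpha)$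 and operator matrices act on vectors entrywise as matrix–vector products; unimodular means invertible over the same ring. A square system $A(y)=b$ with $A=\sum_{i=0}^\ell A_i\sigma^i$ is fully regular if $\det A_\ell\ne0$ and there is a unimodular $P$ over $\mathbb{F}(t)[\sigma,\sigma^{-1}]$ with $PA\in\mathbb{F}(t)[\sigma]^{n\times n}$ having trailing coefficient matrix of nonzero determinant. *)

(* Defs.v *)
From HB Require Import structures.
From mathcomp Require Import all_boot all_order all_algebra.
From Stdlib Require Import ClassicalEpsilon.
Set Implicit Arguments. Unset Strict Implicit. Unset Printing Implicit Defensive.
Import GRing.Theory.
Local Open Scope ring_scope.

(* Kind of the monomial t: Sigma-monomial sigma(t) = t + beta,
   Pi-monomial sigma(t) = alpha * t. *)
Inductive monomial_kind (F : fieldType) := SigmaMon of F | PiMon of F.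

Notation ratfun F := {fraction {poly F}}.
Definition frc (F : fieldType) (a : {poly F}) : ratfun F := FracField.tofrac a.

Definition sig_t (F : fieldType) (k : monomial_kind F) : {poly F} :=
  match k with SigmaMon b => 'X + b%:P | PiMon a => a *: 'X end.
Definition sig_tinv (F : fieldType) (k : monomial_kind F) : {poly F} :=
  match k with SigmaMon b => 'X - b%:P | PiMon a => a^-1 *: 'X end.

Record PiSigma (F : fieldType) := {
  char0 : [pchar F] =i pred0;
  s0 : {rmorphism F -> F};
  s0i : F -> F;
  s0K : cancel s0 s0i;
  s0iK : cancel s0i s0;
  kind : monomial_kind F;
  kind_nz : match kind with SigmaMon b => b != 0 | PiMon a => a != 0 end;
  sK : {rmorphism ratfun F -> ratfun F};
  sKi : ratfun F -> ratfun F;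
  sKK : cancel sK sKi;
  sKiK : cancel sKi sK;
  sK_poly : forall a : {poly F}, sK (frc a) = frc (map_poly s0 a \Po sig_t kind);
  sK_const : forall x, sK x = x -> exists2 c : F, x = frc c%:P & s0 c = c
}.

Section Defs.
Variable F : fieldType.
Variable E : PiSigma F.
Local Notation K := (ratfun F).

Definition sigP (a : {poly F}) : {poly F} := map_poly (s0 E) a \Po sig_t (kind E).
Definition sigPinv (q : {poly F}) : {poly F} := map_poly (s0i E) (q \Po sig_tinv (kind E)).

Definition spread (a b : {poly F}) (k : nat) : Prop :=
  (1 < size (gcdp a (iter k sigP b)))%N.

Inductive extnat := MInf | Fin of nat | PInf.
Definition ext_le (x y : extnat) : bool :=
  match x, y with
  | MInf, _ => true
  | _, PInf => true
  | Fin a, Fin b => (a <= b)%N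
  | _, _ => false
  end.

Definition is_max_of (S : nat -> Prop) (e : extnat) : Prop :=
  match e with
  | MInf => forall k, ~ S k
  | Fin m => S m /\ forall k, S k -> (k <= m)%N
  | PInf => forall m, exists k, S k /\ (m < k)%N
  end.

Definition disp (a b : {poly F}) : extnat :=
  epsilon (inhabits MInf) (is_max_of (spread a b)).

Definition mu (a : {poly F}) : nat := \max_(i < size a | 'X^i %| a) i.
Definition per (a : {poly F}) : {poly F} :=
  match kind E with SigmaMon _ => 1 | PiMon _ => 'X^(mu a) end.
Definition ap (a : {poly F}) : {poly F} := a %/ per a.

Definition spow (j : int) : K -> K :=
  match j with Posz k => iter k (sK E) | Negz k => iter k.+1 (sKi E) end.

(* Operator matrices over F(t)[sigma, sigma^{-1}]:
   Lop lo [:: C_0; ...; C_r] denotes sum_i C_i sigma^(lo + i). *)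
Record lop (n : nat) := Lop { lo : int; cs : seq 'M[K]_n }.

Definition lcoef n (P : lop n) (k : int) : 'M[K]_n :=
  if (lo P <= k)%R then nth 0 (cs P) `|k - lo P|%N else 0.

(* coefficient of sigma^k in the Ore product P * Q *)
Definition lmul n (P Q : lop n) (k : int) : 'M[K]_n :=
  \sum_(j < size (cs P))
     nth 0 (cs P) j *m map_mx (spow (lo P + j%:Z)) (lcoef Q (k - (lo P + j%:Z))).

Definition lone n (k : int) : 'M[K]_n := if k == 0 then 1%:M else 0.

Definition unimodular n (P : lop n) : Prop :=
  exists Q : lop n, (forall k, lmul Q P k = lone n k) /\ (forall k, lmul P Q k = lone n k).

Definition lapply n (P : lop n) (v : 'cV[K]_n) : 'cV[K]_n :=
  \sum_(j < size (cs P)) nth 0 (cs P) j *m map_mx (spow (lo P + j%:Z)) v.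

Definition liftm m n (M : 'M[{poly F}]_(m, n)) : 'M[K]_(m, n) := map_mx (@frc F) M.

Definition polyop n (A : seq 'M[{poly F}]_n) : lop n := Lop 0 (map (@liftm n n) A).

Definition has_denom m n (M : 'M[K]_(m, n)) (q : {poly F}) : Prop :=
  forall i j, exists r : {poly F}, frc q * M i j = frc r.
Definition common_denom m n (M : 'M[K]_(m, n)) (q : {poly F}) : Prop :=
  [/\ q != 0, has_denom M q & forall q', q' != 0 -> has_denom M q' -> q %| q'].

Definition reduced n (d : {poly F}) (z : 'cV[{poly F}]_n) : Prop :=
  d != 0 /\ coprimep d (\big[@gcdp F/0]_(i < n) z i 0).

End Defs.

(* Main.v *)
Require Import Defs.
From HB Require Import structures.
From mathcomp Require Import all_boot all_order all_algebra.
From Stdlib Require Import ClassicalEpsilon Classical Lia.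
From mathcomp Require Import zify.
Import GRing.Theory Num.Theory.
Local Open Scope ring_scope.
Set Implicit Arguments. Unset Strict Implicit. Unset Printing Implicit Defensive.

Section PolySig.
Variable F : fieldType.
Variable E : PiSigma F.
Local Notation sg := (sigP E).
Local Notation sgi := (sigPinv E).
Local Notation q := (sig_t (kind E)).
Local Notation qi := (sig_tinv (kind E)).

Lemma size_q : size q = 2%N.
Proof.
rewrite /sig_t; have := kind_nz E; case: (kind E) => a Ha.
  by rewrite size_XaddC.
by rewrite size_scale // size_polyX.
Qed.

Lemma q_qi : q \Po qi = 'X.
Proof.
rewrite /sig_t /sig_tinv; have := kind_nz E; case: (kind E) => a Ha.
  by rewrite comp_polyD comp_polyX comp_polyC subrK.
by rewrite comp_polyZ comp_polyX scalerA divff // scale1r.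
Qed.

Lemma qi_q : qi \Po q = 'X.
Proof.
rewrite /sig_t /sig_tinv; have := kind_nz E; case: (kind E) => a Ha.
  by rewrite comp_polyB comp_polyX comp_polyC addrK.
by rewrite comp_polyZ comp_polyX scalerA mulVf // scale1r.
Qed.

Lemma s0i0 : s0i E 0 = 0.
Proof. by rewrite -{1}(rmorph0 (s0 E)) s0K. Qed.

Lemma map_s0K (a : {poly F}) : map_poly (s0i E) (map_poly (s0 E) a) = a.
Proof.
by apply/polyP => i; rewrite coef_map_id0 ?s0i0 // coef_map s0K.
Qed.

Lemma map_s0iK (a : {poly F}) : map_poly (s0 E) (map_poly (s0i E) a) = a.
Proof.
by apply/polyP => i; rewrite coef_map /= coef_map_id0 ?s0i0 // s0iK.
Qed.

Lemma sgK : cancel sg sgi.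
Proof.
move=> a; rewrite /sigP /sigPinv -comp_polyA q_qi comp_polyXr.
exact: map_s0K.
Qed.

Lemma sgiK : cancel sgi sg.
Proof.
move=> a; rewrite /sigP /sigPinv map_s0iK -comp_polyA qi_q comp_polyXr //.
Qed.

Lemma sgD (a b : {poly F}) : sg (a + b) = sg a + sg b.
Proof. by rewrite /sigP rmorphD /= comp_polyD. Qed.
Lemma sgM (a b : {poly F}) : sg (a * b) = sg a * sg b.
Proof. by rewrite /sigP rmorphM /= comp_polyM. Qed.
Lemma sg1 : sg 1 = 1.
Proof. by rewrite /sigP rmorph1 comp_polyC. Qed.
Lemma sg0 : sg 0 = 0.
Proof. by rewrite /sigP rmorph0 comp_polyC. Qed.
Lemma sgC (c : F) : sg c%:P = (s0 E c)%:P.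
Proof. by rewrite /sigP map_polyC comp_polyC. Qed.
Lemma sgZ (c : F) (a : {poly F}) : sg (c *: a) = s0 E c *: sg a.
Proof. by rewrite /sigP map_polyZ comp_polyZ. Qed.
Lemma sg_size (a : {poly F}) : size (sg a) = size a.
Proof. by rewrite /sigP size_comp_poly2 ?size_q // size_map_poly. Qed.
Lemma sg_eq0 (a : {poly F}) : (sg a == 0) = (a == 0).
Proof. by rewrite -!size_poly_eq0 sg_size. Qed.

Lemma sg_prod (I : Type) (r : seq I) (P : pred I) (f : I -> {poly F}) :
  sg (\prod_(i <- r | P i) f i) = \prod_(i <- r | P i) sg (f i).
Proof. by apply: (big_morph sg sgM sg1). Qed.

Lemma sgiM (a b : {poly F}) : sgi (a * b) = sgi a * sgi b.
Proof. by rewrite -{1}(sgiK a) -{1}(sgiK b) -sgM sgK. Qed.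
Lemma sgi_size (a : {poly F}) : size (sgi a) = size a.
Proof. by rewrite -{2}(sgiK a) sg_size. Qed.
Lemma sgi_eq0 (a : {poly F}) : (sgi a == 0) = (a == 0).
Proof. by rewrite -!size_poly_eq0 sgi_size. Qed.

Lemma sg_dvdp (a b : {poly F}) : (sg a %| sg b) = (a %| b).
Proof.
apply/idP/idP => /dvdpP [c Hc]; apply/dvdpP.
  by exists (sgi c); rewrite -(sgK b) Hc sgiM sgK.
by exists (sg c); rewrite Hc sgM.
Qed.
Lemma sgi_dvdp (a b : {poly F}) : (sgi a %| sgi b) = (a %| b).
Proof. by rewrite -sg_dvdp !sgiK. Qed.

Lemma itsg_dvdp k (a b : {poly F}) : (iter k sg a %| iter k sg b) = (a %| b).
Proof. by elim: k => //= k IH; rewrite sg_dvdp. Qed.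
Lemma itsgi_dvdp k (a b : {poly F}) : (iter k sgi a %| iter k sgi b) = (a %| b).
Proof. by elim: k => //= k IH; rewrite sgi_dvdp. Qed.
Lemma itsgK k : cancel (iter k sg) (iter k sgi).
Proof. by elim: k => // k IH a; rewrite iterSr /= sgK IH. Qed.
Lemma itsgiK k : cancel (iter k sgi) (iter k sg).
Proof. by elim: k => // k IH a; rewrite iterSr /= sgiK IH. Qed.
Lemma itsg_size k (a : {poly F}) : size (iter k sg a) = size a.
Proof. by elim: k => //= k IH; rewrite sg_size. Qed.
Lemma itsgi_size k (a : {poly F}) : size (iter k sgi a) = size a.
Proof. by elim: k => //= k IH; rewrite sgi_size. Qed.
Lemma itsg_add i j (a : {poly F}) : iter (i + j) sg a = iter i sg (iter j sg a).
Proof. exact: iterD. Qed.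
Lemma itsgM k (a b : {poly F}) : iter k sg (a * b) = iter k sg a * iter k sg b.
Proof. by elim: k => //= k ->; rewrite sgM. Qed.

Lemma sg_irr (a : {poly F}) : irreducible_poly a -> irreducible_poly (sg a).
Proof.
move=> [Hs Hi]; split; first by rewrite sg_size.
move=> c Hc Hd; rewrite -(sgiK c) /eqp !sg_dvdp.
by apply: Hi; rewrite ?sgi_size // -sg_dvdp sgiK.
Qed.
Lemma sgi_irr (a : {poly F}) : irreducible_poly a -> irreducible_poly (sgi a).
Proof.
move=> [Hs Hi]; split; first by rewrite sgi_size.
move=> c Hc Hd; rewrite -(sgK c) /eqp !sgi_dvdp.
by apply: Hi; rewrite ?sg_size // -sgi_dvdp sgK.
Qed.
Lemma itsg_irr k (a : {poly F}) : irreducible_poly a -> irreducible_poly (iter k sg a).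
Proof. by elim: k => //= k IH /IH; apply: sg_irr. Qed.
Lemma itsgi_irr k (a : {poly F}) : irreducible_poly a -> irreducible_poly (iter k sgi a).
Proof. by elim: k => //= k IH /IH; apply: sgi_irr. Qed.

Definition nc (a : {poly F}) : F :=
  match kind E with SigmaMon _ => lead_coef a | PiMon _ => a.[0] end.
Definition nz0 (a : {poly F}) : bool :=
  match kind E with SigmaMon _ => true | PiMon _ => a.[0] != 0 end.

Lemma nc_sg (a : {poly F}) : nc (sg a) = s0 E (nc a).
Proof.
rewrite /nc /sigP; have Hs := size_q; move: Hs.
rewrite /sig_t; case: (kind E) => c Hs.
  rewrite lead_coef_comp ?Hs // lead_coefXaddC expr1n mulr1.
  by rewrite lead_coef_map_inj ?rmorph0 //; apply: fmorph_inj.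
by rewrite horner_comp hornerZ hornerX mulr0 -{1}(rmorph0 (s0 E)) horner_map.
Qed.

Lemma ncM (a b : {poly F}) : nc (a * b) = nc a * nc b.
Proof. by rewrite /nc; case: (kind E) => c; rewrite ?lead_coefM ?hornerM. Qed.

Lemma nc_prod (I : Type) (r : seq I) (P : pred I) (f : I -> {poly F}) :
  nc (\prod_(i <- r | P i) f i) = \prod_(i <- r | P i) nc (f i).
Proof.
apply: (big_morph nc ncM).
by rewrite /nc; case: (kind E) => c; rewrite ?lead_coef1 ?hornerC.
Qed.

Lemma ncZ (c : F) (a : {poly F}) : nc (c *: a) = c * nc a.
Proof. by rewrite /nc; case: (kind E) => e; rewrite ?lead_coefZ ?hornerZ. Qed.

Lemma nz0_nc (a : {poly F}) : a != 0 -> nz0 a -> nc a != 0.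
Proof. by rewrite /nz0 /nc; case: (kind E) => c // Ha _; rewrite lead_coef_eq0. Qed.

Lemma nz0_sg (a : {poly F}) : nz0 (sg a) = nz0 a.
Proof.
have := nc_sg a; rewrite /nz0 /nc; case: (kind E) => // c ->.
by rewrite fmorph_eq0.
Qed.
Lemma nz0_sgi (a : {poly F}) : nz0 (sgi a) = nz0 a.
Proof. by rewrite -{2}(sgiK a) nz0_sg. Qed.
Lemma nz0_itsg k (a : {poly F}) : nz0 (iter k sg a) = nz0 a.
Proof. by elim: k => //= k IH; rewrite nz0_sg. Qed.
Lemma nz0_itsgi k (a : {poly F}) : nz0 (iter k sgi a) = nz0 a.
Proof. by elim: k => //= k IH; rewrite nz0_sgi. Qed.

Lemma nz0_dvd (a b : {poly F}) : a %| b -> nz0 b -> nz0 a.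
Proof.
rewrite /nz0; case: (kind E) => // c /dvdpP [e ->].
by rewrite hornerM mulf_eq0 negb_or => /andP [].
Qed.

End PolySig.

Section Per.
Variable F : fieldType.
Variable E : PiSigma F.
Local Notation sg := (sigP E).
Local Notation sgi := (sigPinv E).

Lemma no_period (g : {poly F}) r : irreducible_poly g -> nz0 E g -> (0 < r)%N ->
  g %| iter r sg g -> False.
Proof.
move=> Hirr Hnz Hr Hdv.
have Hg0 : g != 0 by rewrite -size_poly_gt0; case: Hirr => /ltnW.
have : g %= iter r sg g by rewrite -dvdp_size_eqp // itsg_size.
case/eqpP=> [[c1 c2] /= /andP [Hc1 Hc2] Hc].
set u := c1 / c2.
have Hu : u != 0 by rewrite mulf_neq0 ?invr_eq0.
have Hsr : iter r sg g = u *: g by rewrite /u mulrC -scalerA Hc scalerA mulVf // scale1r.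
clear Hc; case: r Hr Hdv Hsr => // r _ _ Hsr.
set H := \prod_(i < r.+1) iter i sg g.
have HsH : sg H = u *: H.
  rewrite /H sg_prod big_ord_recr /= -/(iter r.+1 sg g) Hsr big_ord_recl /=.
  by rewrite -scalerAr mulrC.
have Hnzi : forall i, iter i sg g != 0 by move=> i; rewrite -size_poly_eq0 itsg_size size_poly_eq0.
have HH0 : H != 0 by apply/prodf_neq0 => i _.
have HncH : nc E H != 0.
  rewrite /H nc_prod; apply/prodf_neq0 => i _.
  by apply: nz0_nc; rewrite ?nz0_itsg.
have Hnc : s0 E (nc E H) = u * nc E H by rewrite -nc_sg HsH ncZ.
set G := (nc E H)^-1 *: H.
have HsG : sg G = G.
  rewrite /G sgZ HsH scalerA fmorphV Hnc invfM -mulrA; congr (_ *: _).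
  by rewrite mulrCA mulVf // mulr1.
have : sK E (frc G) = frc G by rewrite sK_poly -/(sigP E G) HsG.
case/sK_const => c /eqP; rewrite /frc tofrac_eq => /eqP HGc _.
have : (size g <= size H)%N.
  by apply: dvdp_leq => //; rewrite /H big_ord_recl /=; apply: dvdp_mulr.
have : size G = size H by rewrite /G size_scale // invr_eq0.
rewrite HGc => HsGH Hle.
have := size_polyC_leq1 c; case: Hirr => Hs _.
rewrite HsGH => h1; have := leq_ltn_trans h1 (leq_trans Hs Hle).
by rewrite ltnn.
Qed.

Lemma mu_dvd (a : {poly F}) : 'X^(mu a) %| a.
Proof.
have [->|Ha] := eqVneq a 0; first by rewrite dvdp0.
have Hs : (0 < size a)%N by rewrite size_poly_gt0.
have H0 : (0 < #|[pred i : 'I_(size a) | dvdp 'X^i a]|)%N.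
  apply/card_gt0P; exists (Ordinal Hs); by rewrite inE /= expr0 dvd1p.
have [i0 Hi0 Heq] := eq_bigmax_cond (fun i : 'I_(size a) => nat_of_ord i) H0.
rewrite /mu; rewrite (eq_bigl (fun i => i \in [pred i : 'I_(size a) | dvdp 'X^i a])) //.
by rewrite Heq; move: Hi0; rewrite inE.
Qed.

Lemma mu_max (a : {poly F}) k : a != 0 -> 'X^k %| a -> (k <= mu a)%N.
Proof.
move=> Ha Hk.
have Hks : (k < size a)%N by have := dvdp_leq Ha Hk; rewrite size_polyXn.
by rewrite /mu (leq_bigmax_cond (F := fun i : 'I_(size a) => nat_of_ord i) (Ordinal Hks)).
Qed.

Lemma per_dvd (a : {poly F}) : per E a %| a.
Proof. by rewrite /per; case: (kind E) => c; rewrite ?dvd1p ?mu_dvd. Qed.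

Lemma ap_eq (a : {poly F}) : ap E a * per E a = a.
Proof. by rewrite /ap divpK // per_dvd. Qed.

Lemma ap_neq0 (a : {poly F}) : a != 0 -> ap E a != 0.
Proof. by move=> Ha; apply: contraNneq Ha => H0; rewrite -(ap_eq a) H0 mul0r. Qed.

Lemma root0_dvd (g : {poly F}) : root g 0 = ('X %| g).
Proof. by rewrite -dvdp_XsubCl subr0. Qed.

Lemma nz0_ap (a : {poly F}) : a != 0 -> nz0 E (ap E a).
Proof.
move=> Ha; have Heq := ap_eq a; move: Heq; rewrite /nz0 /per.
case: (kind E) => // c Heq.
apply/negP => /eqP H0.
have : dvdp 'X^((mu a).+1) a.
  rewrite -{2}Heq exprSr mulrC; apply: dvdp_mul => //.
  by rewrite -root0_dvd; apply/eqP.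
by move/(mu_max Ha); rewrite ltnn.
Qed.

Lemma dvd_ap (g a : {poly F}) : irreducible_poly g -> nz0 E g -> g %| a -> g %| ap E a.
Proof.
move=> Hirr Hnz; rewrite -{1}(ap_eq a); move: Hnz; rewrite /nz0 /per.
case: (kind E) => c Hnz; first by rewrite mulr1.
rewrite Gauss_dvdpl //; apply: coprimep_expr.
rewrite coprimep_sym.
have := irreducible_poly_coprime g (irredp_XsubC (0 : F)).
rewrite dvdp_XsubCl subr0 => ->.
by rewrite /root.
Qed.

End Per.

Section Orbit.
Variable F : fieldType.
Variable E : PiSigma F.
Local Notation sg := (sigP E).
Local Notation sgi := (sigPinv E).

Lemma bounded_orbit (h : nat -> {poly F}) (x : {poly F}) :
  x != 0 -> (forall j, irreducible_poly (h j)) ->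
  (forall i j, i != j -> ~~ (h i %| h j)) ->
  exists M, forall j, h j %| x -> (j < M)%N.
Proof.
move=> Hx Hirr Hnd.
pose P := fun j => h j %| x.
have key : forall N, dvdp (\prod_(0 <= j < N | P j) h j)%R x /\
    (count P (iota 0 N) < size (\prod_(0 <= j < N | P j) h j)%R)%N.
  elim=> [|N [IH1 IH2]]; first by rewrite big_geq // size_poly1 dvd1p.
  rewrite big_mkcond big_nat_recr // -big_mkcond.
  have -> : iota 0 N.+1 = iota 0 N ++ [:: N] by rewrite -addn1 iotaD.
  rewrite count_cat /=.
  have HhN : (1 < size (h N))%N by case: (Hirr N).
  have Hpr0 : (\prod_(0 <= j < N | P j) h j)%R != 0.
    by apply: contraNneq Hx => H0; move: IH1; rewrite H0 dvd0p.
  case HP : (P N); rewrite /= ?HP /=; last by rewrite mulr1 ?addn0; split.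
  have Hcop : coprimep (\prod_(0 <= j < N | P j) h j)%R (h N).
    rewrite coprimep_sym big_nat_cond.
    apply: (big_ind (fun q => coprimep (h N) q)) => [|a b Ha Hb|j /andP [/andP [_ Hj] _]].
    - exact: coprimep1.
    - by rewrite coprimepMr Ha Hb.
    - by rewrite irreducible_poly_coprime //; apply: Hnd; rewrite neq_ltn Hj orbT.
  split; first by rewrite Gauss_dvdp // IH1.
  have HhN0 : h N != 0 by rewrite -size_poly_gt0 (ltn_trans _ HhN).
  rewrite size_mul // addn1.

  move: IH2 HhN; set c := count _ _; set S := size _; set s := size _; lia.
have Hcnt : forall N, (count P (iota 0 N) < size x)%N.
  move=> N; have [H1 H2] := key N; apply: (leq_trans H2); exact: dvdp_leq.
apply: NNPP => Hn.
have Hunb : forall M, exists j, (M <= j)%N /\ P j.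
  move=> M; apply: NNPP => Hm; apply: Hn; exists M => j Hj.
  rewrite ltnNge; apply/negP => HMj; apply: Hm; by exists j.
have : forall K, exists N, (K <= count P (iota 0 N))%N.
  elim=> [|K [N HN]]; first by exists 0%N.
  have [j [Hj Pj]] := Hunb N.
  exists j.+1; have -> : j.+1 = (N + (j.+1 - N))%N by lia.
  rewrite iotaD count_cat add0n.
  have : (0 < count P (iota N (j.+1 - N)))%N.
    rewrite -has_count; apply/hasP; exists j => //.
    rewrite mem_iota; lia.
  lia.
move=> /(_ (size x)) [N HN].
by have := leq_ltn_trans HN (Hcnt N); rewrite ltnn.
Qed.

Lemma exists_max (P : pred nat) k : P k -> (exists M, forall j, P j -> (j < M)%N) ->
  exists m, [/\ P m, (k <= m)%N & forall j, P j -> (j <= m)%N].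
Proof.
move=> Pk [M HM].
have ub : forall i, P i -> (i <= M)%N by move=> i /HM /ltnW.
case: (ex_maxnP (ex_intro _ k Pk) ub) => i Pi Hmax.
by exists i; split => //; apply: Hmax.
Qed.

Lemma nodiv_orbit (g : {poly F}) r : irreducible_poly g -> nz0 E g -> (0 < r)%N ->
  ~~ (g %| iter r sg g) && ~~ (iter r sg g %| g).
Proof.
move=> Hirr Hnz Hr; apply/andP; split; apply/negP => Hd.
  exact: (no_period Hirr Hnz Hr Hd).
have : iter r sg g %= g by rewrite -dvdp_size_eqp // itsg_size.
rewrite eqp_sym => /andP [Hd' _]; exact: (no_period Hirr Hnz Hr Hd').
Qed.

Lemma sg_orbit_nd (g : {poly F}) : irreducible_poly g -> nz0 E g ->
  forall i j, i != j -> ~~ (iter i sg g %| iter j sg g).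
Proof.
move=> Hirr Hnz i j; rewrite neq_ltn => /orP [] Hij.
  have -> : iter j sg g = iter i sg (iter (j - i)%N sg g) by rewrite -iterD subnKC // ltnW.
  rewrite itsg_dvdp.
  have Hr : (0 < j - i)%N by rewrite subn_gt0.
  by case/andP: (nodiv_orbit Hirr Hnz Hr).
have -> : iter i sg g = iter j sg (iter (i - j)%N sg g) by rewrite -iterD subnKC // ltnW.
rewrite itsg_dvdp.
have Hr : (0 < i - j)%N by rewrite subn_gt0.
by case/andP: (nodiv_orbit Hirr Hnz Hr).
Qed.

Lemma sgi_orbit_nd (g : {poly F}) : irreducible_poly g -> nz0 E g ->
  forall i j, i != j -> ~~ (iter i sgi g %| iter j sgi g).
Proof.
move=> Hirr Hnz i j; rewrite neq_ltn => /orP [] Hij.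
  have -> : iter j sgi g = iter i sgi (iter (j - i)%N sgi g) by rewrite -iterD subnKC // ltnW.
  rewrite itsgi_dvdp.
  have Hr : (0 < j - i)%N by rewrite subn_gt0.
  set g' := iter (j - i)%N sgi g.
  have Hnz' : nz0 E g' by rewrite /g' nz0_itsgi.
  have -> : g = iter (j - i)%N sg g' by rewrite /g' itsgiK.
  by case/andP: (nodiv_orbit (itsgi_irr E (j - i)%N Hirr) Hnz' Hr).
have -> : iter i sgi g = iter j sgi (iter (i - j)%N sgi g) by rewrite -iterD subnKC // ltnW.
rewrite itsgi_dvdp.
have Hr : (0 < i - j)%N by rewrite subn_gt0.
set g' := iter (i - j)%N sgi g.
have Hnz' : nz0 E g' by rewrite /g' nz0_itsgi.
have -> : g = iter (i - j)%N sg g' by rewrite /g' itsgiK.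
by case/andP: (nodiv_orbit (itsgi_irr E (i - j)%N Hirr) Hnz' Hr).
Qed.

Lemma orbit_ext (x f : {poly F}) k : x != 0 -> irreducible_poly f -> nz0 E f ->
  f %| x -> iter k sg f %| x ->
  exists fm kk, [/\ irreducible_poly fm, nz0 E fm, (k <= kk)%N, fm %| x &
     iter kk sg fm %| x] /\
     ((forall j, (0 < j)%N -> ~~ (iter j sgi fm %| x)) /\
     (forall j, (0 < j)%N -> ~~ (iter j sg (iter kk sg fm) %| x))).
Proof.
move=> Hx Hirr Hnz Hf Hkf.
have [a [Ba _ Bmax]] := exists_max (P := fun j => dvdp (iter j sgi f) x) (k := 0%N) Hf
  (bounded_orbit Hx (fun j => itsgi_irr E j Hirr) (sgi_orbit_nd Hirr Hnz)).
set fm := iter a sgi f.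
have Hfm : irreducible_poly fm by apply: itsgi_irr.
have Hnzm : nz0 E fm by rewrite /fm nz0_itsgi.
have Cak : iter (a + k) sg fm %| x by rewrite addnC iterD /fm itsgiK.
have [kk [Ckk Hle Cmax]] := exists_max (P := fun j => dvdp (iter j sg fm) x) Cak
  (bounded_orbit Hx (fun j => itsg_irr E j Hfm) (sg_orbit_nd Hfm Hnzm)).
exists fm, kk; split; [split => // | split].
- by apply: leq_trans Hle; apply: leq_addl.
- idtac.
- move=> j Hj; apply/negP => Hd.
  have := Bmax (j + a)%N; rewrite iterD -/fm => /(_ Hd) H; lia.
- move=> j Hj; apply/negP => Hd.
  have := Cmax (j + kk)%N; rewrite iterD => /(_ Hd) H; lia.
Qed.

End Orbit.

Section Sp.
Variable F : fieldType.
Variable E : PiSigma F.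
Local Notation K := {fraction {poly F}}.
Local Notation sK := (sK E).
Local Notation sKi := (sKi E).
Local Notation sg := (sigP E).
Local Notation sgi := (sigPinv E).

Lemma sK_inj : injective sK.
Proof. exact: can_inj (sKK E). Qed.

Lemma sKiD (x y : K) : sKi (x + y) = sKi x + sKi y.
Proof. by apply: sK_inj; rewrite rmorphD /= !sKiK. Qed.
Lemma sKiM (x y : K) : sKi (x * y) = sKi x * sKi y.
Proof. by apply: sK_inj; rewrite rmorphM /= !sKiK. Qed.
Lemma sKi0 : sKi 0 = 0.
Proof. by apply: sK_inj; rewrite rmorph0 sKiK. Qed.
Lemma sKi1 : sKi 1 = 1.
Proof. by apply: sK_inj; rewrite rmorph1 sKiK. Qed.
Lemma sKiV (x : K) : sKi x^-1 = (sKi x)^-1.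
Proof. by apply: sK_inj; rewrite fmorphV /= !sKiK. Qed.

Lemma sK_frc (a : {poly F}) : sK (frc a) = frc (sg a).
Proof. exact: sK_poly. Qed.
Lemma sKi_frc (a : {poly F}) : sKi (frc a) = frc (sgi a).
Proof. by apply: sK_inj; rewrite sKiK sK_frc sgiK. Qed.

Lemma iter_morph (f : K -> K) (op : K -> K -> K) k :
  (forall x y, f (op x y) = op (f x) (f y)) ->
  forall x y, iter k f (op x y) = op (iter k f x) (iter k f y).
Proof. by move=> Hf x y; elim: k => //= k ->. Qed.
Lemma iter_fix (f : K -> K) (e : K) k : f e = e -> iter k f e = e.
Proof. by move=> Hf; elim: k => //= k ->. Qed.

Lemma spowD c (x y : K) : spow E c (x + y) = spow E c x + spow E c y.
Proof. by case: c => k; rewrite /spow; apply: (iter_morph (op := +%R)) => *; rewrite ?rmorphD ?sKiD. Qed.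
Lemma spowM c (x y : K) : spow E c (x * y) = spow E c x * spow E c y.
Proof. by case: c => k; rewrite /spow; apply: (iter_morph (op := *%R)) => *; rewrite ?rmorphM ?sKiM. Qed.
Lemma spow0 c : spow E c 0 = 0.
Proof. by case: c => k; rewrite /spow; apply: iter_fix; rewrite ?rmorph0 ?sKi0. Qed.
Lemma spowN c (x : K) : spow E c (- x) = - spow E c x.
Proof. by apply/eqP; rewrite -subr_eq0 opprK -spowD addNr spow0. Qed.

Lemma spow_sum c (I : Type) (r : seq I) (P : pred I) (f : I -> K) :
  spow E c (\sum_(i <- r | P i) f i) = \sum_(i <- r | P i) spow E c (f i).
Proof. exact: (big_morph _ (spowD c) (spow0 c)). Qed.

Lemma spow_nat0 (x : K) : spow E 0 x = x.
Proof. by []. Qed.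

Lemma spowS_r c (x : K) : spow E (c + 1) x = spow E c (sK x).
Proof.
case: c => k.
  have -> : Posz k + 1 = Posz k.+1 by rewrite -addn1 PoszD.
  by rewrite /= -iterSr.
case: k => [|k]; first by rewrite /= sKK.
have -> : Negz k.+1 + 1 = Negz k by rewrite !NegzE; lia.
by rewrite /= -[sKi (iter k sKi (sK x))]/(iter k.+1 sKi (sK x)) iterSr sKK.
Qed.

Lemma spow_addn c (k : nat) (x : K) : spow E (c + k%:Z) x = spow E c (spow E k x).
Proof.
elim: k x => [|k IH] x; first by rewrite addr0.
rewrite -addn1 PoszD addrA spowS_r IH /=.
by rewrite addn1 /= -iterSr.
Qed.

Lemma spow_frc (k : nat) (a : {poly F}) : spow E k (frc a) = frc (iter k sg a).
Proof. by elim: k => //= k ->; rewrite sK_frc. Qed.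

Lemma spowV (k : nat) (x : K) : spow E k x^-1 = (spow E k x)^-1.
Proof. by elim: k => //= k ->; rewrite fmorphV. Qed.

Lemma map_spowM c m n p (M : 'M[K]_(m, n)) (N : 'M[K]_(n, p)) :
  map_mx (spow E c) (M *m N) = map_mx (spow E c) M *m map_mx (spow E c) N.
Proof.
apply/matrixP => i j; rewrite !mxE spow_sum; apply: eq_bigr => k _.
by rewrite !mxE spowM.
Qed.

Lemma map_spow_sum c m n (I : Type) (r : seq I) (P : pred I) (f : I -> 'M[K]_(m, n)) :
  map_mx (spow E c) (\sum_(i <- r | P i) f i) = \sum_(i <- r | P i) map_mx (spow E c) (f i).
Proof.
apply/matrixP => i j; rewrite !mxE !summxE spow_sum; apply: eq_bigr => k _.
by rewrite !mxE.
Qed.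

Lemma map_spow0 c m n : map_mx (spow E c) (0 : 'M[K]_(m, n)) = 0.
Proof. by apply/matrixP => i j; rewrite !mxE spow0. Qed.

Lemma map_spowD c m n (M N : 'M[K]_(m, n)) :
  map_mx (spow E c) (M + N) = map_mx (spow E c) M + map_mx (spow E c) N.
Proof. by apply/matrixP => i j; rewrite !mxE spowD. Qed.

Lemma map_spowN c m n (M : 'M[K]_(m, n)) :
  map_mx (spow E c) (- M) = - map_mx (spow E c) M.
Proof. by apply/matrixP => i j; rewrite !mxE spowN. Qed.

Lemma map_spow_addn c (k : nat) m n (M : 'M[K]_(m, n)) :
  map_mx (spow E (c + k%:Z)) M = map_mx (spow E c) (map_mx (spow E k) M).
Proof. by apply/matrixP => i j; rewrite !mxE spow_addn. Qed.

Lemma map_spow_nat0 m n (M : 'M[K]_(m, n)) : map_mx (spow E 0) M = M.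
Proof. by apply/matrixP => i j; rewrite !mxE. Qed.

End Sp.

Lemma sum_shift (V : nmodType) (g : int -> V) (c : int) (s L N : nat) :
  (s + L <= N)%N -> (forall i : nat, (i < s)%N -> g (c + i%:Z) = 0) ->
  (forall i : nat, (s + L <= i)%N -> g (c + i%:Z) = 0) ->
  \sum_(i < N) g (c + i%:Z) = \sum_(i < L) g (c + (s + i)%N%:Z).
Proof.
move=> HN H1 H2.
rewrite -(big_mkord xpredT (fun i : nat => g (c + i%:Z))).
rewrite -(big_mkord xpredT (fun i : nat => g (c + (s + i)%N%:Z))).
rewrite (big_cat_nat (n := s)) //=; last by apply: leq_trans HN; apply: leq_addr.
rewrite [X in X + _]big_nat_cond big1 ?add0r; last first.
  by move=> i /andP [/andP [_ Hi] _]; apply: H1.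
rewrite (big_cat_nat (n := (s + L)%N)) //=; last by apply: leq_addr.
rewrite [X in _ + X]big_nat_cond [X in _ + X]big1 ?addr0; last first.
  by move=> i /andP [/andP [Hi _] _]; apply: H2.
rewrite -{1}(add0n s) big_addn addKn.
by apply: eq_bigr => i _; rewrite addnC.
Qed.

Section Comp.
Variable F : fieldType.
Variable E : PiSigma F.
Local Notation K := {fraction {poly F}}.

Lemma liftm0 m n : liftm (0 : 'M[{poly F}]_(m, n)) = 0.
Proof. by apply/matrixP => i j; rewrite !mxE /frc tofrac0. Qed.

Lemma nth_liftm n (A : seq 'M[{poly F}]_n) i :
  nth 0 (map (@liftm F n n) A) i = liftm (nth 0 A i).
Proof.
have [Hi|Hi] := ltnP i (size A); first by rewrite (nth_map 0).
by rewrite !nth_default ?size_map // liftm0.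
Qed.

Lemma lapply_comp n (P : lop F n) (A At : seq 'M[{poly F}]_n) (l lt : nat) (y : 'cV[K]_n) :
  size A = l.+1 -> size At = lt.+1 ->
  (forall k, lmul E P (polyop A) k = lcoef (polyop At) k) ->
  lapply E P (lapply E (polyop A) y) = lapply E (polyop At) y.
Proof.
move=> HA HAt HPA.
set sP := size (cs P).
set lo0 := lo P.
set c : int := - (absz lo0)%:Z.
set N := ((absz lo0).*2 + sP + l + lt + 2)%N.
pose Y (k : int) := map_mx (spow E k) y.
have HR : lapply E (polyop At) y = \sum_(i < N) lcoef (polyop At) (c + i%:Z) *m Y (c + i%:Z).
  rewrite (sum_shift (g := fun k => lcoef (polyop At) k *m Y k) (s := absz lo0) (L := lt.+1)).
  - rewrite /lapply /= size_map HAt; apply: eq_bigr => i _.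
    have -> : c + (absz lo0 + i)%N%:Z = i%:Z by rewrite /c; lia.
    by rewrite /lcoef /= addn0 add0n.
  - by rewrite /N; lia.
  - move=> i Hi; rewrite /lcoef /=.
    have -> : (0 <= c + i%:Z) = false by apply/negbTE; rewrite -Order.TotalTheory.ltNge /c; lia.
    by rewrite mul0mx.
  - move=> i Hi; rewrite /lcoef /=.
    case: ifP => _; last by rewrite mul0mx.
    rewrite nth_default ?mul0mx // size_map HAt; lia.
rewrite HR; under eq_bigr => i _ do rewrite -HPA /lmul mulmx_suml.
rewrite exchange_big /= /lapply.
apply: eq_bigr => j _.
rewrite map_spow_sum mulmx_sumr.
rewrite (sum_shift (g := fun k => nth 0 (cs P) j *m map_mx (spow E (lo P + j%:Z))
     (lcoef (polyop A) (k - (lo P + j%:Z))) *m Y k) (s := absz (lo0 + j%:Z - c)%R) (L := l.+1)).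
- rewrite /= size_map HA; apply: eq_bigr => i _.
  have -> : c + (absz (lo0 + j%:Z - c)%R + i)%N%:Z = lo P + j%:Z + i%:Z by rewrite /c /lo0; lia.
  have -> : lo P + j%:Z + i%:Z - (lo P + j%:Z) = i%:Z by rewrite addrAC subrr add0r.
  rewrite map_spowM mulmxA /Y [X in _ = _ *m X]map_spow_addn.
  by rewrite /lcoef /= addn0 add0n.
- rewrite /N; have := ltn_ord j; rewrite -/sP /c /lo0; lia.
- move=> i Hi; rewrite /lcoef /=.
  have -> : (0 <= c + i%:Z - (lo P + j%:Z)) = false.
    by apply/negbTE; rewrite -Order.TotalTheory.ltNge /c -/lo0; lia.
  by rewrite map_spow0 mulmx0 mul0mx.
- move=> i Hi; rewrite /lcoef /=.
  case: ifP => _; last by rewrite map_spow0 mulmx0 mul0mx.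
  rewrite [X in map_mx _ X]nth_default; first by rewrite map_spow0 mulmx0 mul0mx.
  rewrite size_map HA /c -/lo0; lia.
Qed.

End Comp.

Section Den.
Variable F : fieldType.
Variable E : PiSigma F.
Local Notation K := {fraction {poly F}}.
Local Notation sg := (sigP E).

Definition polym m n (M : 'M[K]_(m, n)) := forall i j, exists r : {poly F}, M i j = frc r.

Lemma frcD (a b : {poly F}) : frc (a + b) = frc a + frc b. Proof. exact: tofracD. Qed.
Lemma frcM (a b : {poly F}) : frc (a * b) = frc a * frc b. Proof. exact: tofracM. Qed.
Lemma frcN (a : {poly F}) : frc (- a) = - frc a. Proof. exact: tofracN. Qed.
Lemma frc0 : frc (0 : {poly F}) = 0. Proof. exact: tofrac0. Qed.
Lemma frc_eq0 (a : {poly F}) : (frc a == 0) = (a == 0). Proof. exact: tofrac_eq0. Qed.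
Lemma frc_inj : injective (@frc F).
Proof. by move=> a b /eqP; rewrite /frc tofrac_eq => /eqP. Qed.

Lemma polymD m n (M N : 'M[K]_(m, n)) : polym M -> polym N -> polym (M + N).
Proof.
move=> HM HN i j; have [r Hr] := HM i j; have [s Hs] := HN i j.
by exists (r + s); rewrite mxE Hr Hs frcD.
Qed.
Lemma polymN m n (M : 'M[K]_(m, n)) : polym M -> polym (- M).
Proof. by move=> HM i j; have [r Hr] := HM i j; exists (- r); rewrite mxE Hr frcN. Qed.
Lemma polym0 m n : polym (0 : 'M[K]_(m, n)).
Proof. by move=> i j; exists 0; rewrite mxE frc0. Qed.
Lemma polym_sum m n (I : Type) (r : seq I) (P : pred I) (f : I -> 'M[K]_(m, n)) :
  (forall i, P i -> polym (f i)) -> polym (\sum_(i <- r | P i) f i).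
Proof.
move=> H; apply: (big_ind (@polym m n)) => //; [exact: polym0 | exact: polymD].
Qed.
Lemma polym_liftm m n (M : 'M[{poly F}]_(m, n)) : polym (liftm M).
Proof. by move=> i j; exists (M i j); rewrite mxE. Qed.
Lemma polymZ m n (c : {poly F}) (M : 'M[K]_(m, n)) : polym M -> polym (frc c *: M).
Proof. by move=> HM i j; have [r Hr] := HM i j; exists (c * r); rewrite mxE Hr frcM. Qed.
Lemma polymM m n p (M : 'M[K]_(m, n)) (N : 'M[K]_(n, p)) : polym M -> polym N -> polym (M *m N).
Proof.
move=> HM HN i j; rewrite mxE.
have : forall k : 'I_n, exists r, M i k * N k j = frc r.
  by move=> k; have [r Hr] := HM i k; have [s Hs] := HN k j; exists (r * s); rewrite Hr Hs frcM.
move=> H; elim/big_ind: _ => [|x y [r ->] [s ->]|k _].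
- by exists 0; rewrite frc0.
- by exists (r + s); rewrite frcD.
- exact: H k.
Qed.

Variable n : nat.
Variable d : {poly F}.
Variable z : 'cV[{poly F}]_n.
Hypothesis Hd : d != 0.
Local Notation y := ((frc d)^-1 *: liftm z).
Local Notation Y k := (map_mx (spow E (Posz k)) y).

Lemma Y_entry (k : nat) i j : (Y k) i j = frc (iter k sg (z i j)) / frc (iter k sg d).
Proof. by rewrite !mxE spowM spowV !spow_frc mulrC. Qed.

Lemma itsg_neq0 k (a : {poly F}) : a != 0 -> iter k sg a != 0.
Proof. by rewrite -!size_poly_eq0 itsg_size. Qed.

Lemma polymY (k : nat) (D : {poly F}) : iter k sg d %| D -> polym (frc D *: Y k).
Proof.
case/dvdpP => r ->; move=> i j; exists (r * iter k sg (z i j)).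
rewrite mxE Y_entry !frcM -mulrA [X in _ * X]mulrC divfK //.
by rewrite frc_eq0 itsg_neq0.
Qed.

Lemma polym_div (k : nat) (q : {poly F}) : polym (frc q *: Y k) ->
  forall i, iter k sg d %| q * iter k sg (z i 0).
Proof.
move=> H i; have [r Hr] := H i 0; move: Hr; rewrite mxE Y_entry.
have Hn : frc (iter k sg d) != 0 by rewrite frc_eq0 itsg_neq0.
move/(congr1 (fun x => x * frc (iter k sg d))).
rewrite -!mulrA mulVf // mulr1 -!frcM => /frc_inj ->.
exact: dvdp_mull.
Qed.

Lemma polym_sumY (L : nat) (s : 'I_L -> nat) (M : 'I_L -> 'M[{poly F}]_n) (D : {poly F}) :
  (forall i, iter (s i) sg d %| D) ->
  polym (frc D *: \sum_(i < L) liftm (M i) *m Y (s i)).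
Proof.
move=> HD; rewrite scaler_sumr; apply: polym_sum => i _.
rewrite scalemxAr; apply: polymM; first exact: polym_liftm.
exact: polymY.
Qed.

Lemma inv_step (M : 'M[{poly F}]_n) (q D : {poly F}) (Yv W : 'cV[K]_n) :
  \det M != 0 -> has_denom (invmx (liftm M)) q -> liftm M *m Yv = W ->
  polym (frc D *: W) -> polym (frc (q * D) *: Yv).
Proof.
move=> HdM Hq HY HW.
have Hu : liftm M \in unitmx.
  rewrite unitmxE /liftm /frc det_map_mx unitfE.
  by rewrite -/(frc (\det M)) frc_eq0.
have -> : Yv = invmx (liftm M) *m W by rewrite -HY mulKmx.
rewrite frcM -scalerA scalemxAr scalemxAl; apply: polymM => //.
by move=> i j; have [r Hr] := Hq i j; exists r; rewrite mxE.
Qed.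

End Den.

Section Misc.
Variable F : fieldType.

Lemma irr_factor (g : {poly F}) : (1 < size g)%N -> exists f, irreducible_poly f /\ f %| g.
Proof.
have : (size g <= size g)%N by [].
move: {2}(size g) => N; elim: N g => [|N IH] g Hs Hg; first by move: Hs; rewrite leqn0 => /eqP Hs; rewrite Hs in Hg.
case: (classic (forall q : {poly F}, size q != 1%N -> q %| g -> q %= g)) => Hirr.
  by exists g; split; [split | rewrite dvdpp].
have [q Hq] : exists q : {poly F}, ~ (size q != 1%N -> q %| g -> q %= g).
  by apply: NNPP => H; apply: Hirr => q; apply: NNPP => Hn; apply: H; exists q.
have Hq1 : size q != 1%N by apply: NNPP => H; apply: Hq => /H.
have Hqg : q %| g by apply: NNPP => H; apply: Hq => _ /H.
have Hqe : ~~ (q %= g) by apply/negP => H; apply: Hq.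
have Hg0 : g != 0 by rewrite -size_poly_gt0 (ltn_trans _ Hg).
have Hq0 : q != 0 by apply: contraNneq Hg0 => H; move: Hqg; rewrite H dvd0p.
have Hle := dvdp_leq Hg0 Hqg.
have Hne : size q != size g by apply: contra Hqe => /eqP Hsz; rewrite -dvdp_size_eqp // Hsz.
have Hq2 : (1 < size q)%N.
  move: Hq1 Hq0; rewrite -size_poly_eq0; case: (size q) => [|[|k]] //.
have HqN : (size q <= N)%N by rewrite -ltnS (leq_trans _ Hs) // ltn_neqAle Hne Hle.
have [f [Hf Hfq]] := IH q HqN Hq2.
by exists f; split => //; apply: dvdp_trans Hfq Hqg.
Qed.

Lemma red_nodiv n (d f : {poly F}) (z : 'cV[{poly F}]_n) :
  coprimep d (\big[@gcdp F/0]_(i < n) z i 0) -> f %| d -> (1 < size f)%N ->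
  exists i, ~~ (f %| z i 0).
Proof.
move=> Hc Hfd Hf; apply: NNPP => Hn.
have Hall : forall i, f %| z i 0 by move=> i; apply: NNPP => H; apply: Hn; exists i; apply/negP.
have HG : f %| \big[@gcdp F/0]_(i < n) z i 0.
  by apply: (big_ind (fun q => f %| q)) => [|a b Ha Hb|i _]; rewrite ?dvdp0 ?dvdp_gcd ?Ha ?Hb ?Hall.
move: Hc; rewrite /coprimep => /eqP Hs.
have : f %| gcdp d (\big[@gcdp F/0]_(i < n) z i 0) by rewrite dvdp_gcd Hfd HG.
have Hg0 : gcdp d (\big[@gcdp F/0]_(i < n) z i 0) != 0 by rewrite -size_poly_eq0 Hs.
move/(dvdp_leq Hg0); rewrite Hs => H.
by move: Hf; rewrite ltnNge H.
Qed.

Lemma coprime_prod (g : {poly F}) (I : Type) (r : seq I) (P : pred I) (f : I -> {poly F}) :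
  (forall i, P i -> coprimep g (f i)) -> coprimep g (\prod_(i <- r | P i) f i).
Proof.
by move=> H; apply: (big_ind (fun q => coprimep g q)) => [|a b Ha Hb|]; rewrite ?coprimep1 ?coprimepMr ?Ha ?Hb.
Qed.

Lemma gauss_step (g q D w : {poly F}) : g %| q * D * w -> coprimep g w -> coprimep g D -> g %| q.
Proof. by move=> H Hw HD; move: H; rewrite Gauss_dvdpl // Gauss_dvdpl. Qed.

Lemma dvdp_prod_ord (L : nat) (f : 'I_L -> {poly F}) (i : 'I_L) : f i %| \prod_(j < L) f j.
Proof. by rewrite (bigD1 i) //= dvdp_mulr. Qed.

End Misc.

Section Disp.
Variable F : fieldType.
Variable E : PiSigma F.

Lemma is_max_of_ex (S : nat -> Prop) : exists e, is_max_of S e.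
Proof.
case: (classic (exists k, S k)) => [[k0 Hk0]|Hn]; last first.
  by exists MInf => k Hk; apply: Hn; exists k.
case: (classic (exists M, forall k, S k -> (k <= M)%N)) => [[M HM]|Hu]; last first.
  exists PInf => m; apply: NNPP => H; apply: Hu; exists m => k Hk.
  by rewrite leqNgt; apply/negP => Hmk; apply: H; exists k.
have : forall N, (exists k, S k /\ (k <= N)%N) -> exists m, S m /\ forall k, S k -> (k <= N)%N -> (k <= m)%N.
  elim=> [|N IH] [k [Hk HkN]].
    exists 0%N; move: HkN; rewrite leqn0 => /eqP Hk0'; rewrite -Hk0'; split => // j _; lia.
  case: (classic (S N.+1)) => HSN.
    by exists N.+1; split => // j _.
  have [j [Hj HjN]] : exists j, S j /\ (j <= N)%N.
    exists k; split => //; rewrite leq_eqVlt in HkN; case/orP: HkN => [/eqP Hkn|//].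
    by rewrite Hkn in Hk.
  have [m [Hm Hmax]] := IH (ex_intro _ j (conj Hj HjN)).
  exists m; split => // i Hi HiN; apply: Hmax => //.
  rewrite leq_eqVlt in HiN; case/orP: HiN => [/eqP Hin|//].
  by rewrite Hin in Hi.
move/(_ M (ex_intro _ k0 (conj Hk0 (HM _ Hk0)))) => [m [Hm Hmax]].
by exists (Fin m); split => // k Hk; apply: Hmax => //; apply: HM.
Qed.

Lemma disp_spec (a b : {poly F}) : is_max_of (spread E a b) (disp E a b).
Proof. by rewrite /disp; apply: epsilon_spec; apply: is_max_of_ex. Qed.

Lemma disp_le (a b a' b' : {poly F}) :
  (forall k, spread E a b k -> exists k', (k <= k')%N /\ spread E a' b' k') ->
  ext_le (disp E a b) (disp E a' b').
Proof.
move=> H; have H1 := disp_spec a b; have H2 := disp_spec a' b'.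
move: H1 H2; case: (disp E a b) => [|m|] //=; case: (disp E a' b') => [|m'|] //=.
- by move=> [Hm _] H2; have [k' [_ Hk']] := H m Hm; have := H2 k' Hk'.
- move=> [Hm _] [_ Hmax']; have [k' [Hle Hk']] := H m Hm.
  by apply: leq_trans Hle (Hmax' _ Hk').
- move=> Hinf H2; have [k [Hk _]] := Hinf 0%N; have [k' [_ Hk']] := H k Hk.
  by have := H2 k' Hk'.
- move=> Hinf [_ Hmax']; have [k [Hk Hlt]] := Hinf m'; have [k' [Hle Hk']] := H k Hk.
  have := Hmax' _ Hk' => Hk'm; exfalso; lia.
Qed.

End Disp.

Unset Implicit Arguments.
Theorem lemma3 (F : fieldType) (E : PiSigma F) (n : nat)
  (l : nat) (A : seq 'M[{poly F}]_n) (b : 'cV[{poly F}]_n)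
  (HA : size A = l.+1) (HAl : \det (nth 0 A l) != 0)
  (P : lop F n) (HP : unimodular E P)
  (lt : nat) (At : seq 'M[{poly F}]_n) (HAt : size At = lt.+1)
  (HPA : forall k : int, lmul E P (polyop A) k = lcoef (polyop At) k)
  (bt : 'cV[{poly F}]_n) (HPb : lapply E P (liftm b) = liftm bt)
  (HAt0 : \det (nth 0 At 0) != 0)
  (m p : {poly F})
  (Hm : common_denom (invmx (liftm (nth 0 A l))) m)
  (Hp : common_denom (invmx (liftm (nth 0 At 0))) p)
  (d : {poly F}) (z : 'cV[{poly F}]_n) (Hred : reduced d z)
  (Hsol : lapply E (polyop A) ((frc d)^-1 *: liftm z) = liftm b) :
  ext_le (disp E (ap E d) (ap E d))
         (disp E (iter l (sigPinv E) (ap E m)) (ap E p)).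
Proof.
have [Hd0 Hcop] := Hred.
case: Hm => Hm0 Hmden _; case: Hp => Hp0 Hpden _.
set ad := ap E d.
have Had0 : ad != 0 by apply: ap_neq0.
have Hnzad : nz0 E ad by apply: nz0_ap.
have Hadd : ad %| d by rewrite -{1}(ap_eq E d) dvdp_mulr ?dvdpp.
apply: disp_le => k Hk.
have [f0 [Hf0 Hf0d]] := irr_factor Hk.
rewrite dvdp_gcd in Hf0d; case/andP: Hf0d => Hf0a Hf0b.
set f := iter k (sigPinv E) f0.
have Hfa : f %| ad by rewrite -(itsgK E k ad) /f itsgi_dvdp.
have Hfirr : irreducible_poly f by apply: itsgi_irr.
have Hfnz : nz0 E f by apply: (nz0_dvd Hfa Hnzad).
have Hkf : iter k (sigP E) f %| ad by rewrite /f itsgiK.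
have [fm [kk [[Hfmirr Hfmnz Hkk Hfmad HfMad] [Hlow Hhigh]]]] := orbit_ext Had0 Hfirr Hfnz Hfa Hkf.
set fM := iter kk (sigP E) fm.
have HfMirr : irreducible_poly fM by apply: itsg_irr.
have HfMnz : nz0 E fM by rewrite /fM nz0_itsg.
have Hfmd : fm %| d by apply: dvdp_trans Hadd.
have HfMd : fM %| d by apply: dvdp_trans Hadd.
pose y := (frc d)^-1 *: liftm z.
have StepA : iter l (sigP E) fM %| m.
  set g := iter l (sigP E) fM.
  set D' := \prod_(j < l) iter j (sigP E) d.
  have Heq : liftm (nth 0 A l) *m map_mx (spow E (Posz l)) y =
      liftm b - \sum_(j < l) liftm (nth 0 A j) *m map_mx (spow E (Posz j)) y.
    rewrite -Hsol /lapply /= size_map HA big_ord_recr /=.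
    under eq_bigr => j _ do rewrite ?add0n ?nth_liftm.
    by rewrite add0n nth_liftm addrAC subrr add0r.
  have HW : polym (frc D' *: (liftm b - \sum_(j < l) liftm (nth 0 A j) *m map_mx (spow E (Posz j)) y)).
    rewrite scalerBr; apply: polymD; first by apply: polymZ; apply: polym_liftm.
    apply: polymN.
    apply: (@polym_sumY F E n d z Hd0 l (fun j : 'I_l => nat_of_ord j) (fun j : 'I_l => nth 0 A j)).
    by move=> j; apply: (dvdp_prod_ord (fun j : 'I_l => iter j (sigP E) d)).
  have HY := inv_step HAl Hmden Heq HW.
  have Hdiv := polym_div Hd0 HY.
  have [i0 Hi0] := red_nodiv Hcop HfMd (let: (h1, _) := HfMirr in h1).
  have Hgd : g %| iter l (sigP E) d by rewrite /g itsg_dvdp.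
  have Hg2 := dvdp_trans Hgd (Hdiv i0).
  have Hgirr : irreducible_poly g by apply: itsg_irr.
  apply: (gauss_step Hg2).
    by rewrite irreducible_poly_coprime // /g itsg_dvdp.
  apply: coprime_prod => j _.
  rewrite irreducible_poly_coprime //; apply/negP => Hgj.
  have Hlj : (0 < l - j)%N by rewrite subn_gt0.
  have : iter (l - j)%N (sigP E) fM %| ad.
    apply: dvd_ap; [exact: itsg_irr | by rewrite nz0_itsg |].
    rewrite -(itsg_dvdp E j); move: Hgj; rewrite /g -iterD subnKC //.
    exact: ltnW.
  by apply/negP; apply: Hhigh.
have StepB : fm %| p.
  set D'' := \prod_(j < lt) iter j.+1 (sigP E) d.
  have HAt' : lapply E (polyop At) y = liftm bt.
    by rewrite -(lapply_comp y HA HAt HPA) Hsol HPb.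
  have Heq : liftm (nth 0 At 0) *m map_mx (spow E (Posz 0)) y =
      liftm bt - \sum_(j < lt) liftm (nth 0 At j.+1) *m map_mx (spow E (Posz j.+1)) y.
    rewrite -HAt' /lapply /= size_map HAt big_ord_recl /=.
    under eq_bigr => j _ do rewrite ?add0n ?nth_liftm.
    rewrite nth_liftm add0n; under eq_bigr => j _ do rewrite /bump add1n.
    by rewrite -addrA subrr addr0.
  have HW : polym (frc D'' *: (liftm bt - \sum_(j < lt) liftm (nth 0 At j.+1) *m map_mx (spow E (Posz j.+1)) y)).
    rewrite scalerBr; apply: polymD; first by apply: polymZ; apply: polym_liftm.
    apply: polymN.
    apply: (@polym_sumY F E n d z Hd0 lt (fun j : 'I_lt => j.+1) (fun j : 'I_lt => nth 0 At j.+1)).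
    by move=> j; apply: (dvdp_prod_ord (fun j : 'I_lt => iter j.+1 (sigP E) d)).
  have HY := inv_step HAt0 Hpden Heq HW.
  have Hdiv := polym_div Hd0 HY.
  have [i0 Hi0] := red_nodiv Hcop Hfmd (let: (h1, _) := Hfmirr in h1).
  have Hg2 := dvdp_trans Hfmd (Hdiv i0).
  apply: (gauss_step Hg2); first by rewrite irreducible_poly_coprime.
  apply: coprime_prod => j _.
  rewrite irreducible_poly_coprime //; apply/negP => Hgj.
  have : iter j.+1 (sigPinv E) fm %| ad.
    apply: dvd_ap; [exact: itsgi_irr | by rewrite nz0_itsgi |].
    by rewrite -(itsgK E j.+1 d) itsgi_dvdp.
  by apply/negP; apply: Hlow.
exists kk; split => //.
have HfMam : fM %| iter l (sigPinv E) (ap E m).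
  rewrite -(itsgK E l fM) itsgi_dvdp; apply: dvd_ap => //.
  - exact: itsg_irr.
  - by rewrite nz0_itsg.
have HfMp : fM %| iter kk (sigP E) (ap E p) by rewrite /fM itsg_dvdp; apply: dvd_ap.
have Hg : fM %| gcdp (iter l (sigPinv E) (ap E m)) (iter kk (sigP E) (ap E p)).
  by rewrite dvdp_gcd HfMam HfMp.
have Hgn0 : gcdp (iter l (sigPinv E) (ap E m)) (iter kk (sigP E) (ap E p)) != 0.
  rewrite gcdp_eq0 negb_and; apply/orP; left.
  by rewrite -size_poly_eq0 itsgi_size size_poly_eq0 ap_neq0.
apply: leq_trans (dvdp_leq Hgn0 Hg); by case: HfMirr.
Qed.
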